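(* For nonnegative integers $a_1$: $G(a_1,0,0)=0$ if $a_1$ is odd and $G(a_1,0,0)=1$ if $a_1$ is even; $G(a_1,0,a_1)=1$ for all $a_1$; $G(a_1,1,0)=a_1/2$ for even $a_1$; and $G(a_1,2,0)=\big((a_1+1)/2\big)^2$ for odd $a_1$.
   Context: For integers $a_1,a_2,s$ with $a=a_1+a_2$, $G(a_1,a_2,s)=\sum_m N_m$, the sum over integers $m$ such that $a_1-m,\ a_2-(s-m),\ m,\ s-m$ are all nonnegative (an empty sum is $0$), where $N_m$ is the number of permutations $\pi$ of $[a]$ that are decreasing within each of four consecutive blocks of positions of lengths $a_1-m,\ a_2-(s-m),\ m,\ s-m$ (in this order; arbitrary between blocks), and have no fixed point ($\pi_i=i$) in the first two blocks. *)

(* Defs.v *)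
From mathcomp Require Import all_boot all_fingroup.
Set Implicit Arguments. Unset Strict Implicit. Unset Printing Implicit Defensive.

(* Block index (0..3) of the 0-based position i, for four consecutive blocks
   of lengths b1 b2 b3 b4 (the length b4 is implicit: the rest). *)
Definition blk (b1 b2 b3 : nat) (i : nat) : nat :=
  (b1 <= i) + (b1 + b2 <= i) + (b1 + b2 + b3 <= i).

Definition goodperm (a b1 b2 b3 : nat) (p : {perm 'I_a}) : bool :=
  [forall i : 'I_a, forall j : 'I_a,
     ((i < j) && (blk b1 b2 b3 i == blk b1 b2 b3 j)) ==> (p j < p i)] &&
  [forall i : 'I_a, (i < b1 + b2) ==> (p i != i)].

(* N_m for block lengths a1-m, a2-(s-m), m, s-m, with a = a1 + a2. *)
Definition Nm (a1 a2 s m : nat) : nat :=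
  #|[set p : {perm 'I_(a1 + a2)} | goodperm (a1 - m) (a2 - (s - m)) m p]|.

(* G(a1,a2,s): sum over m with a1-m, a2-(s-m), m, s-m all nonnegative. *)
Definition G (a1 a2 s : nat) : nat :=
  \sum_(0 <= m < s.+1 | (m <= a1) && (s - m <= a2)) Nm a1 a2 s m.

(* Main.v *)
Require Import Defs.
From mathcomp Require Import all_boot all_fingroup zify.

Lemma uniq_aux n k (p q : {perm 'I_n}) (i : 'I_n) :
  (forall x y : 'I_n, x < y -> y < k -> p y < p x) ->
  (forall x y : 'I_n, x < y -> y < k -> q y < q x) ->
  (forall x : 'I_n, k <= x -> p x = q x) ->
  (forall x : 'I_n, x < i -> p x = q x) -> i < k -> ~ (p i < q i).
Proof.
move=> Dp Dq E L ik lt.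
pose j := (p^-1)%g (q i).
have pj : p j = q i by rewrite /j permKV.
case: (ltngtP j i) => ji.
- have := L j ji; rewrite pj => /perm_inj /(congr1 (@nat_of_ord n)) eq; lia.
- case: (leqP k j) => kj.
  + have := E j kj; rewrite pj => /perm_inj /(congr1 (@nat_of_ord n)) eq; lia.
  + have := Dp i j ji kj; rewrite pj; lia.
- have eq : j = i by apply/val_inj.
  by move: lt; rewrite -pj eq ltnn.
Qed.

Lemma uniq_dec n k (p q : {perm 'I_n}) :
  (forall x y : 'I_n, x < y -> y < k -> p y < p x) ->
  (forall x y : 'I_n, x < y -> y < k -> q y < q x) ->
  (forall x : 'I_n, k <= x -> p x = q x) -> p = q.
Proof.
move=> Dp Dq E.
suff H : forall m (i : 'I_n), i < m -> p i = q i.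
  apply/permP => i; exact: (H n i (ltn_ord i)).
elim=> [|m IH] i //.
rewrite ltnS leq_eqVlt => /orP [/eqP im|]; last exact: IH.
case: (leqP k i) => ki; first exact: E.
have L : forall x : 'I_n, x < i -> p x = q x by move=> x; rewrite im; exact: IH.
case: (ltngtP (p i) (q i)) => c.
- by case: (@uniq_aux n k p q i Dp Dq E L ki c).
- have E' : forall x : 'I_n, k <= x -> q x = p x by move=> x /E ->.
  have L' : forall x : 'I_n, x < i -> q x = p x by move=> x /L ->.
  by case: (@uniq_aux n k q p i Dq Dp E' L' ki c).
- exact/val_inj.
Qed.

Definition mkfun n (g : nat -> nat) (Hg : forall i, i < n -> g i < n) : 'I_n -> 'I_n :=
  fun i => Ordinal (Hg i (ltn_ord i)).

Lemma mkfun_inj n g Hg (Hi : forall i j, i < n -> j < n -> g i = g j -> i = j) :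
  injective (@mkfun n g Hg).
Proof.
move=> x y /(congr1 val) /= E; apply/val_inj; apply: Hi => //; exact: ltn_ord.
Qed.

Definition mkperm n g Hg Hi : {perm 'I_n} := perm (@mkfun_inj n g Hg Hi).

Lemma mkpermE n g Hg Hi (i : 'I_n) : val (@mkperm n g Hg Hi i) = g i.
Proof. by rewrite /mkperm permE. Qed.

Lemma good_dec a b1 b2 b3 (p : {perm 'I_a}) (x y : 'I_a) :
  goodperm b1 b2 b3 p -> x < y -> blk b1 b2 b3 x = blk b1 b2 b3 y -> p y < p x.
Proof.
case/andP=> /forallP D _ xy bxy.
by move/forallP: (D x) => /(_ y); rewrite xy bxy eqxx => /implyP; apply.
Qed.
Arguments good_dec {a b1 b2 b3 p x y}.

Lemma good_fix a b1 b2 b3 (p : {perm 'I_a}) (x : 'I_a) :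
  goodperm b1 b2 b3 p -> x < b1 + b2 -> nat_of_ord (p x) <> nat_of_ord x.
Proof.
case/andP=> _ /forallP /(_ x) /implyP F xb E.
by move: (F xb); rewrite (_ : p x = x) ?eqxx //; apply/val_inj.
Qed.
Arguments good_fix {a b1 b2 b3 p x}.

Lemma goodP a b1 b2 b3 (p : {perm 'I_a}) :
  (forall x y : 'I_a, x < y -> blk b1 b2 b3 x = blk b1 b2 b3 y -> p y < p x) ->
  (forall x : 'I_a, x < b1 + b2 -> nat_of_ord (p x) <> nat_of_ord x) ->
  goodperm b1 b2 b3 p.
Proof.
move=> D F; apply/andP; split.
  apply/forallP => x; apply/forallP => y; apply/implyP => /andP [xy /eqP b].
  exact: D.
apply/forallP => x; apply/implyP => xb; apply/eqP => E.
by apply: (F x xb); rewrite E.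
Qed.
Arguments goodP {a b1 b2 b3 p}.

Lemma G0 a1 a2 : G a1 a2 0 = Nm a1 a2 0 0.
Proof. by rewrite /G big_mkcond big_nat1 /=. Qed.

Lemma rev_bnd n : forall i, i < n -> n - 1 - i < n.
Proof. move=> i; lia. Qed.
Lemma rev_inj n : forall i j, i < n -> j < n -> n - 1 - i = n - 1 - j -> i = j.
Proof. move=> i j; lia. Qed.
Definition revp n : {perm 'I_n} := mkperm n (fun i => n - 1 - i) (@rev_bnd n) (@rev_inj n).

Lemma dec_rev n (p : {perm 'I_n}) :
  (forall x y : 'I_n, x < y -> p y < p x) -> p = revp n.
Proof.
move=> D; apply: (@uniq_dec n n).
- by move=> x y xy _; exact: D.
- by move=> x y xy _; rewrite !mkpermE; have := ltn_ord y; lia.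
- by move=> x; have := ltn_ord x; lia.
Qed.

Lemma part1 a1 : G a1 0 0 = (if odd a1 then 0 else 1).
Proof.
rewrite G0 /Nm.
have D : forall p : {perm 'I_(a1 + 0)}, goodperm (a1 - 0) (0 - (0 - 0)) 0 p ->
   p = revp (a1 + 0).
  move=> p g; apply: dec_rev => x y xy; apply: (good_dec g xy).
  have := ltn_ord x; have := ltn_ord y; rewrite /blk; lia.
case: ifP => Ho.
  have m2 : a1 %% 2 = 1 by rewrite modn2 Ho.
  rewrite (_ : [set p | _] = set0) ?cards0 //; apply/setP => p; rewrite !inE.
  apply/negP => g.
  have x0 : a1 %/ 2 < a1 + 0 by lia.
  have := good_fix g (x := Ordinal x0); rewrite (D p g) mkpermE /=.
  move=> H; apply: H; lia.
have m2 : a1 %% 2 = 0 by rewrite modn2 Ho.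
rewrite -(cards1 (revp (a1 + 0))); apply: eq_card => p; rewrite !inE.
apply/idP/eqP => [g | ->]; first exact: D.
apply: goodP => [x y xy _|x _]; rewrite !mkpermE; [have := ltn_ord y|have := ltn_ord x]; lia.
Qed.

Lemma part2 a1 : G a1 0 a1 = 1.
Proof.
rewrite /G big_mkcond big_nat_recr //= subnn leqnn /= big_nat big1 ?add0n;
  last by move=> i /andP [_ ilt]; rewrite ifF //; apply/negbTE; lia.
rewrite /Nm -(cards1 (revp (a1 + 0))); apply: eq_card => p; rewrite !inE.
apply/idP/eqP => [g | ->].
  apply: dec_rev => x y xy; apply: (good_dec g xy).
  have := ltn_ord x; have := ltn_ord y; rewrite /blk; lia.
apply: goodP => [x y xy _|x]; rewrite ?mkpermE; [have := ltn_ord y|]; lia.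
Qed.

Definition g3 a1 v j :=
  if j == a1 then minn v a1 else if j < a1 - minn v a1 then a1 - j else a1 - 1 - j.

Lemma g3_bnd a1 v : forall i, i < a1 + 1 -> g3 a1 v i < a1 + 1.
Proof. move=> i; rewrite /g3; repeat (case: ifP => ?); lia. Qed.
Lemma g3_inj a1 v : forall i j, i < a1 + 1 -> j < a1 + 1 -> g3 a1 v i = g3 a1 v j -> i = j.
Proof. move=> i j; rewrite /g3; repeat (case: ifP => ?); lia. Qed.
Definition mk3 a1 v : {perm 'I_(a1 + 1)} := mkperm (a1 + 1) (g3 a1 v) (@g3_bnd a1 v) (@g3_inj a1 v).

Lemma part3 a1 : ~~ odd a1 -> G a1 1 0 = a1 %/ 2.
Proof.
move=> Ho; have m2 : a1 %% 2 = 0 by rewrite modn2 (negbTE Ho).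
rewrite G0 /Nm.
pose F := fun i : 'I_(a1 %/ 2) => mk3 a1 (a1 %/ 2 + i).
have l0 : a1 < a1 + 1 by lia.
have Finj : injective F.
  move=> i j /(congr1 (fun p : {perm 'I_(a1 + 1)} => nat_of_ord (p (Ordinal l0)))).
  rewrite /F !mkpermE /g3 /= eqxx => E; apply/val_inj => /=.
  have := ltn_ord i; have := ltn_ord j; lia.
rewrite -[a1 %/ 2]card_ord -cardsT -(card_imset _ Finj).
apply: eq_card => p; rewrite inE; apply/idP/imsetP => [g | [i _ ->]].
{ have [v Ev] : exists v, v = nat_of_ord (p (Ordinal l0)) by eexists.
  have vlt : v < a1 + 1 by rewrite Ev; exact: ltn_ord.
  have pE : p = mk3 a1 v.
    apply: (@uniq_dec _ a1).
    - move=> x y xy ya; apply: (good_dec g xy); rewrite /blk; lia.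
    - move=> x y xy ya; rewrite !mkpermE /g3; repeat (case: ifP => ?); lia.
    - move=> x ax; have := ltn_ord x => xa.
      have ex : x = Ordinal l0 by apply/val_inj => /=; lia.
      apply/val_inj; rewrite mkpermE /g3 ex /= eqxx -Ev; lia.
  have f1 := good_fix g (x := Ordinal l0) ltac:(simpl; lia).
  have h2 : a1 %/ 2 < a1 + 1 by lia.
  have f2 := good_fix g (x := Ordinal h2) ltac:(simpl; lia).
  rewrite pE mkpermE /= in f1; rewrite pE mkpermE /= in f2; move: f1 f2; rewrite /g3 /=.
  rewrite eqxx; repeat (case: ifP => ?); move=> f1 f2; try lia.
  all: have il : v - a1 %/ 2 < a1 %/ 2 by lia.
  all: exists (Ordinal il); rewrite ?inE // pE /F /=; congr mk3; lia. }
apply: goodP => [x y xy|x _]; rewrite /F !mkpermE /g3 /blk;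
  [have := ltn_ord y; have := ltn_ord i | have := ltn_ord x; have := ltn_ord i];
  repeat (case: ifP => ?); lia.
Qed.

Definition cu a1 u := maxn 1 (minn u (a1 + 1)).
Definition cw a1 u w := minn w (cu a1 u - 1).
Definition g4 a1 u w j :=
  if j == a1 then cu a1 u else if j == a1 + 1 then cw a1 u w
  else if j < a1 + 1 - cu a1 u then a1 + 1 - j
  else if j < a1 - cw a1 u w then a1 - j else a1 - 1 - j.

Lemma g4_bnd a1 u w : forall i, i < a1 + 2 -> g4 a1 u w i < a1 + 2.
Proof. move=> i; rewrite /g4 /cw /cu; repeat (case: ifP => ?); lia. Qed.
Lemma g4_inj a1 u w : forall i j, i < a1 + 2 -> j < a1 + 2 -> g4 a1 u w i = g4 a1 u w j -> i = j.
Proof. move=> i j; rewrite /g4 /cw /cu; repeat (case: ifP => ?); lia. Qed.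
Definition mk4 a1 u w : {perm 'I_(a1 + 2)} :=
  mkperm (a1 + 2) (g4 a1 u w) (@g4_bnd a1 u w) (@g4_inj a1 u w).

Lemma part4 a1 : odd a1 -> G a1 2 0 = ((a1 + 1) %/ 2) ^ 2.
Proof.
move=> Ho; have m2 : a1 %% 2 = 1 by rewrite modn2 Ho.
rewrite G0 /Nm.
pose uf := fun i : nat => if i == a1 %/ 2 then a1 + 1 else a1 %/ 2 + 1 + i.
pose F := fun x : 'I_(a1 %/ 2 + 1) * 'I_(a1 %/ 2 + 1) => mk4 a1 (uf x.1) x.2.
have l0 : a1 < a1 + 2 by lia.
have l1 : a1 + 1 < a1 + 2 by lia.
have Finj : injective F.
  move=> [i j] [i' j'] E.
  have E0 := congr1 (fun p : {perm 'I_(a1 + 2)} => nat_of_ord (p (Ordinal l0))) E.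
  have E1 := congr1 (fun p : {perm 'I_(a1 + 2)} => nat_of_ord (p (Ordinal l1))) E.
  move: E0 E1; rewrite /F /= !mkpermE /g4 /= eqxx.
  rewrite (_ : (a1 + 1 == a1) = false); last by apply/negbTE; lia.
  rewrite eqxx /cw /cu /uf => E0 E1.
  have := ltn_ord i; have := ltn_ord j; have := ltn_ord i'; have := ltn_ord j'.
  move: E0 E1; repeat (case: ifP => ?); move=> E0 E1 *;
  congr pair; apply/val_inj => /=; lia.
have -> : ((a1 + 1) %/ 2) ^ 2 = #|[set: 'I_(a1 %/ 2 + 1) * 'I_(a1 %/ 2 + 1)]|.
  by rewrite cardsT card_prod !card_ord (_ : (a1 + 1) %/ 2 = a1 %/ 2 + 1) ?expn2 //; lia.
rewrite -(card_imset _ Finj).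
apply: eq_card => p; rewrite inE; apply/idP/imsetP => [g | [[i j] _ ->]].
{ have [u Eu] : exists u, u = nat_of_ord (p (Ordinal l0)) by eexists.
  have [w Ew] : exists w, w = nat_of_ord (p (Ordinal l1)) by eexists.
  have ult : u < a1 + 2 by rewrite Eu; exact: ltn_ord.
  have wu : w < u.
    rewrite Eu Ew; apply: (good_dec g) => /=; [lia | rewrite /blk; lia].
  have pE : p = mk4 a1 u w.
    apply: (@uniq_dec _ a1).
    - move=> x y xy ya; apply: (good_dec g xy); rewrite /blk; lia.
    - move=> x y xy ya; rewrite !mkpermE /g4 /cw /cu; repeat (case: ifP => ?); lia.
    - move=> x ax; have := ltn_ord x => xa.
      case: (ltngtP x a1) => c; first lia.
        have ex : x = Ordinal l1 by apply/val_inj => /=; lia.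
        apply/val_inj; rewrite mkpermE /g4 ex /= -Ew.
        rewrite (_ : (a1 + 1 == a1) = false) ?eqxx; last by apply/negbTE; lia.
        rewrite /cw /cu; lia.
      have ex : x = Ordinal l0 by apply/val_inj => /=; lia.
      apply/val_inj; rewrite mkpermE /g4 ex /= -Eu eqxx /cu; lia.
  have f1 := good_fix g (x := Ordinal l0) ltac:(simpl; lia).
  have h2 : a1 %/ 2 < a1 + 2 by lia.
  have h3 : a1 %/ 2 + 1 < a1 + 2 by lia.
  have f2 := good_fix g (x := Ordinal h2) ltac:(simpl; lia).
  have f3 := good_fix g (x := Ordinal h3) ltac:(simpl; lia).
  rewrite pE mkpermE /= in f1; rewrite pE mkpermE /= in f2;
  rewrite pE mkpermE /= in f3.
  have c1 : u <> a1 by move: f1; rewrite /g4 eqxx /cu; lia.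
  have c2 : w <= a1 %/ 2.
    by move: f2; rewrite /g4 /cw /cu; repeat (case: ifP => ?); lia.
  have c3 : a1 %/ 2 + 1 <= u.
    by move: f3; rewrite /g4 /cw /cu; repeat (case: ifP => ?); lia.
  have il : (if u == a1 + 1 then a1 %/ 2 else u - a1 %/ 2 - 1) < a1 %/ 2 + 1.
    by case: ifP => ?; lia.
  have jl : w < a1 %/ 2 + 1 by lia.
  exists (Ordinal il, Ordinal jl) => //; rewrite pE /F /uf /=; congr mk4.
  by case: (u =P a1 + 1) => Hu /=; [rewrite eqxx | case: eqP => ?]; lia. }
have := ltn_ord i; have := ltn_ord j => il jl.
have [u [Hu1 Hu2 Hu3]] : exists u, [/\ uf i = u, a1 %/ 2 + 1 <= u & u <> a1 /\ u < a1 + 2].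
  by exists (uf i); rewrite /uf; split => //; case: eqP => ?; lia.
have Hcu : cu a1 u = u by rewrite /cu; lia.
have Hcw : cw a1 u j = j by rewrite /cw Hcu; lia.
apply: goodP => [x y xy|x _]; rewrite /F /= Hu1 !mkpermE /g4 Hcu Hcw.
  have := ltn_ord y; rewrite /blk => ya bl.
  repeat (case: ifP => ?); lia.
have := ltn_ord x; repeat (case: ifP => ?); lia.
Qed.

Theorem mainTheorem13 :
  (forall a1 : nat, G a1 0 0 = (if odd a1 then 0 else 1)) /\
  (forall a1 : nat, G a1 0 a1 = 1) /\
  (forall a1 : nat, ~~ odd a1 -> G a1 1 0 = a1 %/ 2) /\
  (forall a1 : nat, odd a1 -> G a1 2 0 = ((a1 + 1) %/ 2) ^ 2).
Proof.
split; first exact: part1.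
split; first exact: part2.
split; first exact: part3.
exact: part4.
Qed.
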